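(* For every sequence $s\in\mathbb Z_{\ge0}^n$, the set of $s$-Tamari trees forms a sublattice of the $s$-weak order.
   Context: Let $s=(s(1),\dots,s(n))\in\mathbb Z_{\ge0}^n$. An $s$-decreasing tree is a planar rooted tree with $n$ internal nodes labeled bijectively by $1,\dots,n$ (leaves unlabeled), the node $i$ having exactly $s(i)+1$ ordered children (subtrees numbered $0,\dots,s(i)$ left to right), labels decreasing from the root. For $a<b$, $\mathrm{card}_T(b,a)$ is $k$ if $a$ lies in the $k$-th child subtree of $b$, $0$ if $a$ is not a descendant of $b$ and lies to the left of $b$, and $s(b)$ if $a$ is not a descendant of $b$ and lies to the right of $b$. The $s$-weak order: $T\le T'$ iff $\mathrm{card}_T(b,a)\le\mathrm{card}_{T'}(b,a)$ for all $a<b$; it is a lattice. An $s$-Tamari tree is an $s$-decreasing tree $T$ with $\mathrm{card}_T(c,a)\le\mathrm{card}_T(c,b)$ for all $1\le a<b<c\le n$. *)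

(* Defs.v *)
From mathcomp Require Import all_boot.
Set Implicit Arguments. Unset Strict Implicit. Unset Printing Implicit Defensive.

Inductive tree : Type := Leaf | Node of nat & seq tree.

Fixpoint labels (t : tree) : seq nat :=
  match t with
  | Leaf => [::]
  | Node l ch => l :: flatten (map labels ch)
  end.

(* s(i) for 1 <= i <= n, with s given as the sequence (s(1),...,s(n)). *)
Definition sval (s : seq nat) (i : nat) : nat := nth 0 s i.-1.

Definition node_label (t : tree) : option nat :=
  match t with Leaf => None | Node l _ => Some l end.

Fixpoint dec_ok (s : seq nat) (t : tree) : bool :=
  match t with
  | Leaf => true
  | Node l ch =>
      [&& size ch == (sval s l).+1,
          all (fun c => if node_label c is Some l' then l' < l else true) ch
        & all (dec_ok s) ch]
  end.

Definition s_decreasing (s : seq nat) (T : tree) : Prop :=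
  perm_eq (labels T) (iota 1 (size s)) /\ dec_ok s T.

Fixpoint children_of (b : nat) (t : tree) : option (seq tree) :=
  match t with
  | Leaf => None
  | Node l ch =>
      if l == b then Some ch
      else foldr (fun c acc => if children_of b c is Some x then Some x else acc)
                 None ch
  end.

(* card_T(b,a) for a < b:
   - k if a lies in the k-th child subtree of b (children numbered 0..s(b));
   - 0 if a is not a descendant of b and lies to the left of b;
   - s(b) if a is not a descendant of b and lies to the right of b.
   For non-descendants, "left of b" is read off the preorder: two nodes that
   are not ancestor-related appear in preorder in left-to-right order (and a,
   having a smaller label, cannot be an ancestor of b). *)
Definition tcard (s : seq nat) (T : tree) (b a : nat) : nat :=
  match children_of b T with
  | Some ch =>
      if has (fun c => a \in labels c) ch then find (fun c => a \in labels c) ch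
      else if index a (labels T) < index b (labels T) then 0 else sval s b
  | None => 0
  end.

Definition s_weak_le (s : seq nat) (T T' : tree) : Prop :=
  forall a b, 1 <= a -> a < b -> b <= size s -> tcard s T b a <= tcard s T' b a.

Definition s_tamari (s : seq nat) (T : tree) : Prop :=
  s_decreasing s T /\
  forall a b c, 1 <= a -> a < b -> b < c -> c <= size s ->
    tcard s T c a <= tcard s T c b.

Definition is_meet (s : seq nat) (T1 T2 M : tree) : Prop :=
  [/\ s_decreasing s M, s_weak_le s M T1, s_weak_le s M T2 &
      forall N, s_decreasing s N -> s_weak_le s N T1 -> s_weak_le s N T2 ->
        s_weak_le s N M].

Definition is_join (s : seq nat) (T1 T2 J : tree) : Prop :=
  [/\ s_decreasing s J, s_weak_le s T1 J, s_weak_le s T2 J &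
      forall N, s_decreasing s N -> s_weak_le s T1 N -> s_weak_le s T2 N ->
        s_weak_le s J N].

(* Main.v *)
Require Import Defs.
From mathcomp Require Import all_boot zify.
Set Implicit Arguments. Unset Strict Implicit. Unset Printing Implicit Defensive.

Definition tree_ind2 (P : tree -> Prop) (HL : P Leaf)
  (HN : forall l ch, (forall k, k < size ch -> P (nth Leaf ch k)) -> P (Node l ch)) :
  forall t, P t :=
  fix F (t : tree) : P t :=
    match t with
    | Leaf => HL
    | Node l ch => HN l ch
        ((fix G (ch : seq tree) : forall k, k < size ch -> P (nth Leaf ch k) :=
          match ch return forall k, k < size ch -> P (nth Leaf ch k) with
          | [::] => fun k (H : k < 0) => False_ind _ (notF H)
          | t0 :: ch' => fun k => match k return k < (size ch').+1 -> P (nth Leaf (t0 :: ch') k) with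
                          | 0 => fun _ => F t0
                          | k'.+1 => fun H => G ch' k' H
                          end
          end) ch)
    end.

Lemma mem_flatten_nth (T : eqType) (L : seq (seq T)) i x :
  i < size L -> x \in nth [::] L i -> x \in flatten L.
Proof. by move=> Hi Hx; apply/flattenP; exists (nth [::] L i) => //; apply: mem_nth. Qed.

Lemma flatten_nthP (T : eqType) (L : seq (seq T)) x :
  x \in flatten L -> exists2 i, i < size L & x \in nth [::] L i.
Proof.
move/flattenP=> [l Hl Hx]; exists (index l L); first by rewrite index_mem.
by rewrite nth_index.
Qed.

Lemma flatten_disj (T : eqType) (L : seq (seq T)) i j x :
  uniq (flatten L) -> i < size L -> j < size L ->
  x \in nth [::] L i -> x \in nth [::] L j -> i = j.
Proof.
move=> U.
wlog lt : i j / i < j.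
  move=> W Hi Hj Hxi Hxj; case: (ltngtP i j) => h.
  - exact: W.
  - by apply/esym; apply: W.
  - by [].
move=> Hi Hj Hxi Hxj; exfalso.
move: U; rewrite -(cat_take_drop j L) flatten_cat cat_uniq => /and3P[_ /hasP H _].
apply: H; exists x.
- rewrite (drop_nth [::] Hj) /=; rewrite mem_cat Hxj //.
- apply: (@mem_flatten_nth _ _ i); first by rewrite size_take Hj.
  by rewrite nth_take.
Qed.

Lemma flatten_index_lt (T : eqType) (L : seq (seq T)) i j x y :
  uniq (flatten L) -> i < j -> j < size L ->
  x \in nth [::] L i -> y \in nth [::] L j ->
  index x (flatten L) < index y (flatten L).
Proof.
move=> U ij Hj Hx Hy.
have xA : x \in flatten (take j L).
  apply: (@mem_flatten_nth _ _ i); first by rewrite size_take Hj.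
  by rewrite nth_take.
have yB : y \in flatten (drop j L) by rewrite (drop_nth [::] Hj) /= mem_cat Hy.
move: U; rewrite -(cat_take_drop j L) flatten_cat cat_uniq => /and3P[_ /hasPn H _].
have yA : y \notin flatten (take j L) by apply: H.
rewrite !index_cat xA (negbTE yA).
apply: (leq_trans _ (leq_addr _ _)); by rewrite index_mem.
Qed.

Lemma flatten_index_same (T : eqType) (L : seq (seq T)) k x y :
  uniq (flatten L) -> k < size L ->
  x \in nth [::] L k -> y \in nth [::] L k ->
  (index x (flatten L) < index y (flatten L)) = (index x (nth [::] L k) < index y (nth [::] L k)).
Proof.
move=> U Hk Hx Hy.
have E : flatten L = flatten (take k L) ++ (nth [::] L k ++ flatten (drop k.+1 L)).
  by rewrite -{1}(cat_take_drop k L) flatten_cat (drop_nth [::] Hk).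
move: (U). rewrite E cat_uniq => /and3P[_ /hasPn H _].
have xA : x \notin flatten (take k L) by apply: H; rewrite mem_cat Hx.
have yA : y \notin flatten (take k L) by apply: H; rewrite mem_cat Hy.
rewrite !index_cat (negbTE xA) (negbTE yA).
by rewrite Hx Hy ltn_add2l.
Qed.

Definition cfold b (ch : seq tree) :=
  foldr (fun c acc => if children_of b c is Some x then Some x else acc) None ch.

Lemma children_of_node b l ch :
  children_of b (Node l ch) = if l == b then Some ch else cfold b ch.
Proof. by []. Qed.

Lemma cfold_none b ch :
  (forall k, k < size ch -> children_of b (nth Leaf ch k) = None) -> cfold b ch = None.
Proof.
elim: ch => [//|t ch IH] H /=.
rewrite (H 0 erefl); apply: IH => k Hk; exact: (H k.+1).
Qed.

Lemma cfold_some b ch k x :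
  k < size ch -> (forall j, j < k -> children_of b (nth Leaf ch j) = None) ->
  children_of b (nth Leaf ch k) = Some x -> cfold b ch = Some x.
Proof.
elim: ch k => [//|t ch IH] [|k] /= Hk Hj Hx; first by rewrite Hx.
rewrite (Hj 0 erefl); apply: (IH k) => // j Hjk; exact: (Hj j.+1).
Qed.

Lemma cfold_inv b ch x :
  cfold b ch = Some x -> exists2 k, k < size ch & children_of b (nth Leaf ch k) = Some x.
Proof.
elim: ch => [//|t ch IH] /=.
case E: (children_of b t) => [y|].
  by move=> [<-]; exists 0.
by move/IH => [k Hk Hx]; exists k.+1.
Qed.

Lemma labels_node l ch : labels (Node l ch) = l :: flatten (map labels ch).
Proof. by []. Qed.

Lemma labels_child l ch k x :
  k < size ch -> x \in labels (nth Leaf ch k) -> x \in labels (Node l ch).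
Proof.
move=> Hk Hx; rewrite labels_node in_cons; apply/orP; right.
apply: (@mem_flatten_nth _ _ k); first by rewrite size_map.
by rewrite (nth_map Leaf).
Qed.

Lemma labels_nodeP l ch x :
  x \in labels (Node l ch) -> x = l \/ exists2 k, k < size ch & x \in labels (nth Leaf ch k).
Proof.
rewrite labels_node in_cons => /orP[/eqP->|]; first by left.
move/flatten_nthP=> [k Hk Hx]; right; rewrite size_map in Hk; exists k => //.
by rewrite (nth_map Leaf) in Hx.
Qed.

Lemma uniq_child l ch k :
  uniq (labels (Node l ch)) -> k < size ch -> uniq (labels (nth Leaf ch k)).
Proof.
rewrite labels_node /= => /andP[_ U] Hk.
have Hk' : k < size (map labels ch) by rewrite size_map.
move: U; rewrite -(cat_take_drop k (map labels ch)) flatten_cat (drop_nth [::] Hk') /=.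
rewrite !cat_uniq => /and3P[_ _ /and3P[]].
by rewrite (nth_map Leaf).
Qed.

Lemma child_disj l ch i j x :
  uniq (labels (Node l ch)) -> i < size ch -> j < size ch ->
  x \in labels (nth Leaf ch i) -> x \in labels (nth Leaf ch j) -> i = j.
Proof.
rewrite labels_node /= => /andP[_ U] Hi Hj Hxi Hxj.
apply: (@flatten_disj _ (map labels ch) i j x) => //; rewrite ?size_map //;
  by rewrite (nth_map Leaf).
Qed.

Lemma root_notin_child l ch k :
  uniq (labels (Node l ch)) -> k < size ch -> l \notin labels (nth Leaf ch k).
Proof.
move=> U Hk; apply/negP => H.
move: U; rewrite labels_node /= => /andP[/negP N _]; apply: N.
by apply: (@mem_flatten_nth _ _ k); rewrite ?size_map // (nth_map Leaf).
Qed.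

Lemma children_none c t : c \notin labels t -> children_of c t = None.
Proof.
elim/tree_ind2: t => [//|l ch IH] H.
rewrite children_of_node.
have -> : (l == c) = false.
  by apply/negbTE; apply: contra H => /eqP->; rewrite labels_node mem_head.
apply: cfold_none => k Hk; apply: IH => //.
by apply: contra H; apply: labels_child.
Qed.

Lemma children_some c t : c \in labels t -> exists x, children_of c t = Some x.
Proof.
elim/tree_ind2: t => [//|l ch IH] H.
rewrite children_of_node; case: eqP => [_|ne]; first by eexists.
have {}[k Hk Hc] : exists2 k, k < size ch & c \in labels (nth Leaf ch k).
  by case: (labels_nodeP H) => // E; exfalso; apply: ne; rewrite E.
pose P := fun t => c \in labels t.
have Hh : has P ch by apply/(has_nthP Leaf); exists k.
set k0 := find P ch.
have Hk0 : k0 < size ch by rewrite -has_find.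
have Hc0 : c \in labels (nth Leaf ch k0) by exact: (nth_find Leaf Hh).
have [x Hx] := IH k0 Hk0 Hc0.
exists x; apply: (cfold_some Hk0) => // j Hj.
apply: children_none; by have := before_find Leaf Hj => /negbT.
Qed.

Lemma children_sub s c t ch' :
  children_of c t = Some ch' ->
  (forall k, k < size ch' -> {subset labels (nth Leaf ch' k) <= labels t}) /\
  (dec_ok s t -> size ch' = (Defs.sval s c).+1).
Proof.
elim/tree_ind2: t ch' => [//|l ch IH] ch'.
rewrite children_of_node; case: eqP => [<- [<-]|ne].
  split; first by move=> k Hk x Hx; apply: (labels_child l Hk).
  by rewrite /= => /and3P[/eqP].
move/cfold_inv => [k Hk Hx]; have [H1 H2] := IH k Hk ch' Hx.
split; first by move=> j Hj x /(H1 j Hj); apply: labels_child.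
rewrite /= => /and3P[_ _ /(all_nthP Leaf) A]; exact: H2 (A k Hk).
Qed.

Lemma children_of_child m ch k c :
  uniq (labels (Node m ch)) -> k < size ch -> c \in labels (nth Leaf ch k) ->
  children_of c (Node m ch) = children_of c (nth Leaf ch k).
Proof.
move=> U Hk Hc.
have ne : (m == c) = false.
  by apply/negbTE; apply: contraNneq (root_notin_child U Hk) => ->.
rewrite children_of_node ne.
have [x Hx] := children_some Hc.
rewrite Hx; apply: (cfold_some Hk) => // j Hj; apply: children_none.
apply/negP => Hcj; have := child_disj U (ltn_trans Hj Hk) Hk Hcj Hc; lia.
Qed.

Lemma index_node m ch x : x != m ->
  index x (labels (Node m ch)) = (index x (flatten (map labels ch))).+1.
Proof. by rewrite labels_node /= eq_sym => /negbTE->. Qed.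

Lemma tcard_root s m ch a k :
  uniq (labels (Node m ch)) -> k < size ch -> a \in labels (nth Leaf ch k) ->
  tcard s (Node m ch) m a = k.
Proof.
move=> U Hk Ha; rewrite /tcard children_of_node eqxx.
have Hh : has (fun c => a \in labels c) ch by apply/(has_nthP Leaf); exists k.
rewrite Hh; apply: (child_disj U (_ : _ < size ch) Hk _ Ha); first by rewrite -has_find.
exact: (nth_find Leaf Hh).
Qed.

Lemma tcard_same s m ch k c a :
  uniq (labels (Node m ch)) -> k < size ch ->
  a \in labels (nth Leaf ch k) -> c \in labels (nth Leaf ch k) ->
  tcard s (Node m ch) c a = tcard s (nth Leaf ch k) c a.
Proof.
move=> U Hk Ha Hc; rewrite /tcard (children_of_child U Hk Hc).
case: (children_of c (nth Leaf ch k)) => [chc|//].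
case: ifP => // _.
have am : a != m by apply: contraNneq (root_notin_child U Hk) => <-.
have cm : c != m by apply: contraNneq (root_notin_child U Hk) => <-.
rewrite !index_node // ltnS.
move: U; rewrite labels_node /= => /andP[_ U].
rewrite (@flatten_index_same _ _ k) ?size_map // ?(nth_map Leaf) //.
Qed.

Lemma tcard_diff s m ch kc ka c a :
  uniq (labels (Node m ch)) -> kc < size ch -> ka < size ch ->
  c \in labels (nth Leaf ch kc) -> a \in labels (nth Leaf ch ka) -> ka != kc ->
  tcard s (Node m ch) c a = if ka < kc then 0 else Defs.sval s c.
Proof.
move=> U Hkc Hka Hc Ha ne; rewrite /tcard (children_of_child U Hkc Hc).
have [chc E] := children_some Hc; rewrite E.
have -> : has (fun c => a \in labels c) chc = false.
  apply/negbTE/negP => /(has_nthP Leaf) [j Hj Haj].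
  have [H1 _] := children_sub s E.
  have := child_disj U Hka Hkc Ha (H1 j Hj a Haj); move/eqP: ne; lia.
have am : a != m by apply: contraNneq (root_notin_child U Hka) => <-.
have cm : c != m by apply: contraNneq (root_notin_child U Hkc) => <-.
rewrite !index_node // ltnS.
move: U; rewrite labels_node /= => /andP[_ U].
case: (ltngtP ka kc) => h.
- by rewrite (@flatten_index_lt _ _ ka kc) ?size_map // ?(nth_map Leaf).
- have := (@flatten_index_lt _ (map labels ch) kc ka c a U h).
  rewrite ?size_map ?(nth_map Leaf) // => /(_ Hka Hc Ha) H.
  by rewrite ltnNge (ltnW H).
- by move/eqP: ne.
Qed.

Lemma labels_le_root s t : dec_ok s t -> forall x, x \in labels t ->
  (if node_label t is Some m then x <= m else true).
Proof.
elim/tree_ind2: t => [//|l ch IH] /= /and3P[_ /(all_nthP Leaf) A1 /(all_nthP Leaf) A2] x.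
move/labels_nodeP => [->//|[k Hk Hx]].
have := IH k Hk (A2 k Hk) x Hx; have := A1 k Hk.
case: (nth Leaf ch k) Hx => [//|l' ch'] /= _; lia.
Qed.

Lemma labels_le_node s m ch x : dec_ok s (Node m ch) -> x \in labels (Node m ch) -> x <= m.
Proof. by move=> D Hx; have := labels_le_root D Hx. Qed.

Lemma tcard_le s t c a : dec_ok s t -> tcard s t c a <= Defs.sval s c.
Proof.
move=> D; rewrite /tcard; case E: (children_of c t) => [ch|//].
have [_ H2] := children_sub s E; have Hs := H2 D.
case: ifP => [Hh|_]; last by case: ifP.
by move: Hh; rewrite has_find Hs ltnS.
Qed.

Definition Pcond (s : seq nat) (f : nat -> nat -> nat) a c d :=
  (f d a < f d c -> f c a = 0) /\ (f d c < f d a -> f c a = Defs.sval s c).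

Lemma dec_ok_child s m ch k : dec_ok s (Node m ch) -> k < size ch -> dec_ok s (nth Leaf ch k).
Proof. by move=> /= /and3P[_ _ /(all_nthP Leaf) A] Hk; apply: A. Qed.

Lemma tcard_P s t : dec_ok s t -> uniq (labels t) ->
  forall a c d, a \in labels t -> c \in labels t -> d \in labels t -> a < c -> c < d ->
  Pcond s (tcard s t) a c d.
Proof.
elim/tree_ind2: t => [//|m ch IH] D U a c d Ha Hc Hd ac cd.
have Bd := tcard_le d a D; have Bd' := tcard_le d c D.
have [ka Hka Ha'] : exists2 k, k < size ch & a \in labels (nth Leaf ch k).
  case: (labels_nodeP Ha) => // E; have := labels_le_node D Hd; lia.
have [kc Hkc Hc'] : exists2 k, k < size ch & c \in labels (nth Leaf ch k).
  case: (labels_nodeP Hc) => // E; have := labels_le_node D Hd; lia.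
rewrite /Pcond.
case: (labels_nodeP Hd) => [->|[kd Hkd Hd']].
  rewrite (tcard_root s U Hka Ha') (tcard_root s U Hkc Hc').
  case: (eqVneq ka kc) => [->|ne]; first by split => h; lia.
  rewrite (tcard_diff s U Hkc Hka Hc' Ha' ne); case: ifP; lia.
case: (eqVneq ka kd) => [Ead|nead]; case: (eqVneq kc kd) => [Ecd|necd].
- subst ka kc.
  rewrite !(tcard_same s U Hkd) //.
  apply: IH => //; [exact: (dec_ok_child D Hkd) | exact: (uniq_child U Hkd)].
- subst ka.
  rewrite (tcard_same s U Hkd Ha' Hd') (tcard_diff s U Hkd Hkc Hd' Hc' necd).
  have nedc : kd != kc by rewrite eq_sym.
  rewrite (tcard_diff s U Hkc Hkd Hc' Ha' nedc).
  move: Bd; rewrite (tcard_same s U Hkd Ha' Hd') => Bd.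
  case: ifP; case: ifP; lia.
- subst kc.
  rewrite (tcard_same s U Hkd Hc' Hd') (tcard_diff s U Hkd Hka Hd' Ha' nead).
  rewrite (tcard_diff s U Hkd Hka Hc' Ha' nead).
  move: Bd'; rewrite (tcard_same s U Hkd Hc' Hd') => Bd'.
  case: ifP; lia.
- rewrite (tcard_diff s U Hkd Hka Hd' Ha' nead) (tcard_diff s U Hkd Hkc Hd' Hc' necd).
  case: (eqVneq ka kc) => [Eac|neac].
    subst ka; case: ifP; lia.
  rewrite (tcard_diff s U Hkc Hka Hc' Ha' neac).
  move/eqP: nead; move/eqP: necd; move/eqP: neac.
  case: ifP; case: ifP; case: ifP; lia.
Qed.

Definition mx (S : seq nat) := foldr maxn 0 S.

Lemma mx_ge S x : x \in S -> x <= mx S.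
Proof.
rewrite /mx; elim: S => [//|y S IH] /=; rewrite in_cons => /orP[/eqP->|/IH]; lia.
Qed.

Lemma mx_mem y S : mx (y :: S) \in y :: S.
Proof.
rewrite /mx; elim: S y => [|z S IH] y /=; first by rewrite maxn0 mem_head.
have := IH z; rewrite /= !in_cons.
case: (leqP y (maxn z (foldr maxn 0 S))) => h.
  by move=> /orP[->|->]; rewrite ?orbT.
by rewrite eqxx.
Qed.

Fixpoint build (s : seq nat) (f : nat -> nat -> nat) (fuel : nat) (S : seq nat) : tree :=
  match fuel with
  | 0 => Leaf
  | fu.+1 => if S is [::] then Leaf else
      Node (mx S) (map (fun k => build s f fu [seq x <- S | (x < mx S) && (f (mx S) x == k)])
                       (iota 0 (Defs.sval s (mx S)).+1))
  end.

Lemma sum_count (P : pred nat) (g : nat -> nat) S K :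
  sumn [seq count (fun x => P x && (g x == k)) S | k <- iota 0 K] =
  count (fun x => P x && (g x < K)) S.
Proof.
elim: K => [|K IH].
  by rewrite /= (@eq_count _ _ pred0) ?count_pred0 // => x; rewrite andbF.
rewrite -addn1 iotaD map_cat sumn_cat IH /= addn0 add0n.
rewrite -count_predUI.
rewrite (@eq_count _ (predI _ _) pred0) ?count_pred0 ?addn0; last first.
  move=> x /=; case: (P x) => //=; apply/negbTE; apply/negP => /andP[h /eqP e]; lia.
apply: eq_count => x /=; case: (P x) => //=. by rewrite addn1 ltnS (leq_eqVlt (g x)) orbC.
Qed.

Lemma build_ok s f n :
  (forall c a, 0 < a -> a < c -> c <= n -> f c a <= Defs.sval s c) ->
  (forall a c d, 0 < a -> a < c -> c < d -> d <= n -> Pcond s f a c d) ->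
  forall fu S, size S <= fu -> uniq S -> (forall x, x \in S -> 0 < x <= n) ->
  [/\ perm_eq (labels (build s f fu S)) S, dec_ok s (build s f fu S) &
     (forall c a, a \in S -> c \in S -> a < c -> tcard s (build s f fu S) c a = f c a)].
Proof.
move=> HB HP; elim=> [|fu IH] S.
  by case: S.
case: S => [_ _ _ //|y S'] HS U HR.
set S := y :: S'.
have mS : mx S \in S by apply: mx_mem.
set m := mx S.
have mn : 0 < m <= n by apply: HR.
set Sk := fun k => [seq x <- S | (x < m) && (f m x == k)].
have IHk : forall k, [/\ perm_eq (labels (build s f fu (Sk k))) (Sk k), dec_ok s (build s f fu (Sk k)) &
     (forall c a, a \in Sk k -> c \in Sk k -> a < c -> tcard s (build s f fu (Sk k)) c a = f c a)].
  move=> k; apply: IH.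
  - rewrite size_filter.
    have : count (predC (fun x => (x < m) && (f m x == k))) S > 0.
      by rewrite -has_count; apply/hasP; exists m => //=; rewrite ltnn.
    have := count_predC (fun x => (x < m) && (f m x == k)) S.
    move=> E P0; rewrite -ltnS; apply: leq_trans HS; rewrite -/S -E -{1}(addn0 (count _ S)) ltn_add2l; exact: P0.
  - exact: filter_uniq.
  - by move=> x; rewrite mem_filter => /andP[_ /HR].
set K := (Defs.sval s m).+1.
have Tdef : build s f fu.+1 S = Node m (map (fun k => build s f fu (Sk k)) (iota 0 K)) by [].
rewrite Tdef.
set ch := map _ _.
have szch : size ch = K by rewrite size_map size_iota.
have nthch : forall k, k < K -> nth Leaf ch k = build s f fu (Sk k).
  by move=> k Hk; rewrite (nth_map 0) ?size_iota // nth_iota.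
have xlem : forall x, x \in S -> x != m -> x < m.
  by move=> x Hx; have := mx_ge Hx; rewrite -/m; lia.
have fK : forall x, x \in S -> x < m -> f m x < K.
  move=> x Hx xm; rewrite ltnS; apply: HB => //; [by have := HR x Hx; lia | lia].
have Perm : perm_eq (labels (Node m ch)) S.
  rewrite labels_node perm_sym; apply: (perm_trans (perm_to_rem mS)).
  rewrite perm_cons (rem_filter _ U) perm_sym.
  apply/permP => p.
  rewrite count_flatten -map_comp.
  rewrite /ch -map_comp.
  rewrite (@eq_map _ _ _ (fun k => count p (Sk k))); last first.
    by move=> k /=; have [P1 _ _] := IHk k; apply/permP.
  rewrite /Sk.
  rewrite (@eq_map _ _ _ (fun k => count (fun x => (p x && (x < m)) && (f m x == k)) S)); last first.
    by move=> k; rewrite count_filter; apply: eq_count => x /=; rewrite andbA.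
  rewrite sum_count count_filter; apply: eq_in_count => x Hx /=.
  case: (eqVneq x m) => [->|ne]; first by rewrite ltnn !andbF.
  by rewrite (xlem x Hx ne) (fK x Hx (xlem x Hx ne)) !andbT.
have UT : uniq (labels (Node m ch)) by rewrite (perm_uniq Perm).
have inch : forall x, x \in S -> x != m -> x \in labels (nth Leaf ch (f m x)).
  move=> x Hx ne; have xm := xlem x Hx ne; rewrite nthch ?fK //.
  have [P1 _ _] := IHk (f m x); rewrite (perm_mem P1).
  by rewrite mem_filter xm eqxx Hx.
split => //.
- apply/and3P; split; first by rewrite szch.
    apply/(all_nthP Leaf) => k Hk; rewrite szch in Hk; rewrite nthch //.
    have [P1 _ _] := IHk k.
    case E: (build s f fu (Sk k)) => [//|l ch'] /=.
    have : l \in Sk k by rewrite -(perm_mem P1) E labels_node mem_head.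
    by rewrite mem_filter => /andP[/andP[]].
  apply/(all_nthP Leaf) => k Hk; rewrite szch in Hk; rewrite nthch //.
  by have [_ P2 _] := IHk k.
- move=> c a Ha Hc ac.
  have am : a != m by apply/negP => /eqP E; have := mx_ge Hc; rewrite -/m; lia.
  have ka := fK a Ha (xlem a Ha am).
  have Ha' := inch a Ha am.
  case: (eqVneq c m) => [->|cm].
    by rewrite (tcard_root s UT _ Ha') // szch.
  have kc := fK c Hc (xlem c Hc cm).
  have Hc' := inch c Hc cm.
  case: (eqVneq (f m a) (f m c)) => [E|ne].
    rewrite -E in Hc'; rewrite (tcard_same s UT _ Ha' Hc') ?szch //.
    rewrite nthch //; have [_ _ P3] := IHk (f m a); apply: P3 => //.
    + by rewrite mem_filter (xlem a Ha am) eqxx Ha.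
    + by rewrite mem_filter (xlem c Hc cm) E eqxx Hc.
  rewrite (tcard_diff s UT _ _ Hc' Ha' ne) ?szch //.
  have a0 : 0 < a by have := HR a Ha; lia.
  have mn' : m <= n by lia.
  have [H1 H2] := HP a c m a0 ac (xlem c Hc cm) mn'.
  move: ne; case: ifP => h ne.
    by rewrite H1.
  by rewrite H2 //; move/eqP: ne; lia.
Qed.

Lemma realize s f :
  (forall c a, 0 < a -> a < c -> c <= size s -> f c a <= Defs.sval s c) ->
  (forall a c d, 0 < a -> a < c -> c < d -> d <= size s -> Pcond s f a c d) ->
  exists N, s_decreasing s N /\
    forall c a, 0 < a -> a < c -> c <= size s -> tcard s N c a = f c a.
Proof.
move=> HB HP.
have Hs : size (iota 1 (size s)) <= size s by rewrite size_iota.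
have HR : forall x, x \in iota 1 (size s) -> 0 < x <= size s by move=> x; rewrite mem_iota; lia.
have [P1 P2 P3] := build_ok HB HP Hs (iota_uniq 1 (size s)) HR.
exists (build s f (size s) (iota 1 (size s))); split; first by split.
move=> c a a0 ac cn; apply: P3 => //; rewrite mem_iota; lia.
Qed.

Lemma tree_facts s T : s_decreasing s T ->
  (forall c a, tcard s T c a <= Defs.sval s c) /\
  (forall a c d, 0 < a -> a < c -> c < d -> d <= size s -> Pcond s (tcard s T) a c d).
Proof.
move=> [Pm D]; split; first by move=> c a; apply: tcard_le.
move=> a c d a0 ac cd dn; apply: tcard_P => //.
- by rewrite (perm_uniq Pm) iota_uniq.
- by rewrite (perm_mem Pm) mem_iota; lia.
- by rewrite (perm_mem Pm) mem_iota; lia.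
- by rewrite (perm_mem Pm) mem_iota; lia.
Qed.

Definition mnf (u : nat -> nat) (l : seq nat) (d : nat) :=
  foldr (fun x acc => minn (u x) acc) d l.

Lemma mnf_le_d u l d : mnf u l d <= d.
Proof. elim: l => [//|x l IH] /=; rewrite /mnf /= -/(mnf u l d); lia. Qed.

Lemma mnf_le u l d x : x \in l -> mnf u l d <= u x.
Proof.
elim: l => [//|y l IH]; rewrite in_cons /mnf /= -/(mnf u l d) => /orP[/eqP->|/IH]; lia.
Qed.

Lemma mnf_glb u l d w : (forall x, x \in l -> w <= u x) -> w <= d -> w <= mnf u l d.
Proof.
elim: l => [//|y l IH] H wd; rewrite /mnf /= -/(mnf u l d).
have := H y (mem_head _ _).
have : w <= mnf u l d by apply: IH => // x Hx; apply: H; rewrite in_cons Hx orbT.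
lia.
Qed.

Lemma mnf_cat u l1 l2 d : mnf u (l1 ++ l2) d = mnf u l1 (mnf u l2 d).
Proof. by rewrite /mnf foldr_cat. Qed.

Lemma mnf_lt u l d v : mnf u l d < v -> d < v \/ exists2 x, x \in l & u x < v.
Proof.
elim: l => [|y l IH]; first by left.
rewrite /mnf /= -/(mnf u l d).
case: (ltnP (u y) v) => h.
  by move=> _; right; exists y => //; rewrite mem_head.
move=> H; have : mnf u l d < v by lia.
move/IH => [|[x Hx Hux]]; first by left.
by right; exists x => //; rewrite in_cons Hx orbT.
Qed.

Theorem theorem2p2 (s : seq nat) :
  (forall T1 T2 M, s_tamari s T1 -> s_tamari s T2 -> is_meet s T1 T2 M ->
     s_tamari s M) /\
  (forall T1 T2 J, s_tamari s T1 -> s_tamari s T2 -> is_join s T1 T2 J ->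
     s_tamari s J).
Proof.
split.
- move=> T1 T2 M [D1 Tm1] [D2 Tm2] [DM L1 L2 Hm].
  have [B1 P1] := tree_facts D1; have [B2 P2] := tree_facts D2.
  set h := fun c a => minn (tcard s T1 c a) (tcard s T2 c a).
  have HBh : forall c a, 0 < a -> a < c -> c <= size s -> h c a <= Defs.sval s c.
    move=> c a _ _ _; rewrite /h; have := B1 c a; lia.
  have HPh : forall a c d, 0 < a -> a < c -> c < d -> d <= size s -> Pcond s h a c d.
    move=> a c d a0 ac cd dn; rewrite /Pcond /h.
    have [Q1 Q2] := P1 a c d a0 ac cd dn; have [R1 R2] := P2 a c d a0 ac cd dn.
    have X1 := Tm1 a c d a0 ac cd dn; have X2 := Tm2 a c d a0 ac cd dn.
    split=> H.
      case: (leqP (tcard s T1 d a) (tcard s T2 d a)) => h12.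
        have : tcard s T1 d a < tcard s T1 d c by lia.
        move/Q1; lia.
      have : tcard s T2 d a < tcard s T2 d c by lia.
      move/R1; lia.
    exfalso; lia.
  have [N [DN HN]] := realize HBh HPh.
  have NM : s_weak_le s N M.
    apply: Hm => // a b a0 ab bn; rewrite HN // /h; lia.
  split => // a b c a0 ab bc cn.
  have := L1 a c a0 (ltn_trans ab bc) cn; have := L2 a c a0 (ltn_trans ab bc) cn.
  have := NM b c (ltn_trans a0 ab) bc cn; rewrite HN //; last lia.
  have := Tm1 a b c a0 ab bc cn; have := Tm2 a b c a0 ab bc cn.
  rewrite /h; lia.
- move=> T1 T2 J [D1 Tm1] [D2 Tm2] [DJ L1 L2 Hj].
  have [BJ PJ] := tree_facts DJ.
  set g := fun c b => mnf (tcard s J c) (iota b (c - b)) (Defs.sval s c).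
  have gsplit : forall c a b, a <= b <= c -> g c a = mnf (tcard s J c) (iota a (b - a)) (g c b).
    move=> c a b H; rewrite /g -mnf_cat.
    have -> : c - a = (b - a) + (c - b) by lia.
    rewrite iotaD; congr (mnf _ (_ ++ iota _ _) _); lia.
  have gle : forall c a, a < c -> g c a <= tcard s J c a.
    by move=> c a ac; apply: mnf_le; rewrite mem_iota; lia.
  have HBg : forall c a, 0 < a -> a < c -> c <= size s -> g c a <= Defs.sval s c.
    by move=> c a _ _ _; apply: mnf_le_d.
  have HPg : forall a c d, 0 < a -> a < c -> c < d -> d <= size s -> Pcond s g a c d.
    move=> a c d a0 ac cd dn; rewrite /Pcond.
    rewrite (gsplit d a c) ?(ltnW ac) ?(ltnW cd) //.
    split=> H.
      case: (mnf_lt H) => [|[x Hx Hux]]; first lia.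
      move: Hx; rewrite mem_iota => /andP[ax xc].
      have xc' : x < c by lia.
      have Hjc := gle d c cd.
      have [Q1 _] := PJ x c d (leq_trans a0 ax) xc' cd dn.
      have Z := Q1 (leq_trans Hux Hjc).
      have : g c a <= tcard s J c x by apply: mnf_le; rewrite mem_iota; lia.
      lia.
    exfalso; have := mnf_le_d (tcard s J d) (iota a (c - a)) (g d c); lia.
  have [N [DN HN]] := realize HBg HPg.
  have lowb : forall T, s_tamari s T -> s_weak_le s T J -> s_weak_le s T N.
      move=> T [DT TmT] LT a c a0 ac cn; rewrite HN //.
      apply: mnf_glb; last by have [BT _] := tree_facts DT; apply: BT.
      move=> x; rewrite mem_iota => /andP[ax xc].
      have xc' : x < c by lia.
      case: (eqVneq x a) => [->|ne]; first exact: LT.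
      apply: leq_trans (LT x c (leq_trans a0 ax) xc' cn).
      apply: TmT => //; lia.
    have JN : s_weak_le s J N by apply: Hj => //; apply: lowb.
    split => // a b c a0 ab bc cn.
    have := JN a c a0 (ltn_trans ab bc) cn; rewrite HN //; last lia.
    have := gle c b bc.
    rewrite (gsplit c a b) ?(ltnW ab) ?(ltnW bc) //.
    have := mnf_le_d (tcard s J c) (iota a (b - a)) (g c b).
    lia.
Qed.
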